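(* Let $n\ge 2$, $q\ge 2$ be integers, $S_1=\sqrt{q^2+4(q-1)(n-2)}$, let $d$ be an integer and define $j$ by $d=n-1-\frac{n-2+j}{q}$ with $j\in\left[0,\frac{S_1-q}{2}\right)$. Put $d_0=n-\frac{j(n-1)}{q(j+q-1)}$ and let $e\in(0,1]$ be such that $d_0+e$ is an integer. Define $$\begin{aligned} A&=-(q+j-2)[eq(j+q-1)]^2+(n-1)(q-1)(j+q)[n(q-1)-j(q+j-2)]\\&\quad+eq(j+q-1)[(q^2+jq-q-2j)(q+j-2)+2n(q-1)],\\ B&=(n-2+j)(q-1)+j(j-1)+eq(j+q-1),\\ C&=(n-1)(q-1)(j+q)+eq(j+q-1),\\ D&=\Big[(n-1)(q-1)+(2e-1)(j+q-1)\tfrac{q}{2}\Big]^2+(j+q-1)^2\Big[(n-1)(q-1)-\tfrac{q^2}{4}\Big],\\ E&=(j+q-1)^3[(n-1)(q-2)+n-j], \end{aligned}$$ and $$\mu_d^*=\frac{n(q-1)CD[C+q(j+q-1)]}{AB[B+q(j+q-1)]},\quad \mu_{d_0+e-1}^*=\frac{en(q-1)E[C+q(j+q-1)]}{AB},\quad \mu_{d_0+e}^*=\frac{(1-e)n(q-1)CE}{A[B+q(j+q-1)]}.$$ Then for each $l\in\{1,2,3\}$, $$\mu_d^*\frac{K_l^{(n,q)}(d)}{r_l}+\mu_{d_0+e-1}^*\frac{K_l^{(n,q)}(d_0+e-1)}{r_l}+\mu_{d_0+e}^*\frac{K_l^{(n,q)}(d_0+e)}{r_l}=-1.$$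
   Context: $K_l^{(n,q)}(z)=\sum_{i=0}^{l}(-1)^i(q-1)^{l-i}\binom{z}{i}\binom{n-z}{l-i}$ is the Krawtchouk polynomial and $r_l=(q-1)^l\binom{n}{l}$. *)

(* Defs.v *)
From HB Require Import structures.
From mathcomp Require Import all_boot all_order all_algebra.
Set Implicit Arguments. Unset Strict Implicit. Unset Printing Implicit Defensive.
Import Order.TTheory GRing.Theory Num.Theory.
Local Open Scope ring_scope.

Definition binr (R : fieldType) (x : R) (k : nat) : R :=
  (\prod_(m < k) (x - m%:R)) / (k`!)%:R.

Definition kraw (R : fieldType) (n q l : nat) (z : R) : R :=
  \sum_(i < l.+1) (-1) ^+ i * (q%:R - 1) ^+ (l - i)
                 * binr z i * binr (n%:R - z) (l - i).

Definition rl (R : fieldType) (n q l : nat) : R :=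
  (q%:R - 1) ^+ l * ('C(n, l))%:R.

(* Main.v *)
Require Import Defs.
From HB Require Import structures.
From mathcomp Require Import all_boot all_order all_algebra.
From mathcomp Require Import ring lra.
Import Order.TTheory GRing.Theory Num.Theory.
Set Implicit Arguments. Unset Strict Implicit.
Local Open Scope ring_scope.

Ltac kr := rewrite /kraw !big_ord_recr big_ord0 /binr /= !big_ord_recr !big_ord0 /= ?big_ord_recr ?big_ord0 /= ?big_ord_recr ?big_ord0 /=;
  rewrite ?factS ?fact0 /= ?expr0 ?expr1 ?expr2.

Lemma kraw1 (R : numFieldType) n q (z : R) : kraw n q 1 z = (q%:R - 1) * (n%:R - z) - z.
Proof. kr. by field. Qed.
Lemma kraw2 (R : numFieldType) n q (z : R) : kraw n q 2 z = (q%:R - 1)^+2 * (n%:R - z) * (n%:R - z - 1) / 2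
   - (q%:R - 1) * z * (n%:R - z) + z * (z - 1) / 2.
Proof. kr. by field. Qed.
Lemma kraw3 (R : numFieldType) n q (z : R) : kraw n q 3 z = (q%:R - 1)^+3 * (n%:R - z) * (n%:R - z - 1) * (n%:R - z - 2) / 6
   - (q%:R - 1)^+2 * z * (n%:R - z) * (n%:R - z - 1) / 2 + (q%:R - 1) * z * (z - 1) * (n%:R - z) / 2
   - z * (z - 1) * (z - 2) / 6.
Proof. kr. by field. Qed.
Lemma bin3R (R : numFieldType) k : ('C(k.+2, 3))%:R = (k.+2)%:R * ((k.+2)%:R - 1) * ((k.+2)%:R - 2) / 6 :> R.
Proof.
have := bin_ffact k.+2 3; rewrite !ffactnS ffactn0 /= => /(congr1 (fun x => x%:R : R)).
rewrite !natrM !mulr1 => h.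
have h6 : (3%:R * 2%:R : R) != 0 by rewrite -natrM pnatr_eq0.
have -> : ('C(k.+2, 3))%:R = (k.+2)%:R * ((k.+1)%:R * k%:R) / (3%:R * 2%:R) :> R.
  by rewrite -h mulfK.
rewrite -[k.+2]addn2 -[k.+1]addn1 !natrD. by field.
Qed.
Lemma bin2R (R : numFieldType) k : ('C(k.+1, 2))%:R = (k.+1)%:R * ((k.+1)%:R - 1) / 2 :> R.
Proof.
have := bin_ffact k.+1 2; rewrite !ffactnS ffactn0 /= => /(congr1 (fun x => x%:R : R)).
rewrite !natrM !mulr1 => h.
have -> : ('C(k.+1, 2))%:R = (k.+1)%:R * k%:R / 2%:R :> R.
  by rewrite -h mulfK ?pnatr_eq0.
rewrite -[k.+1]addn1 !natrD. by field.
Qed.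
Definition K1 (R : numFieldType) (n q z : R) := (q - 1) * (n - z) - z.
Definition K2 (R : numFieldType) (n q z : R) := (q - 1)^+2 * (n - z) * (n - z - 1) / 2
   - (q - 1) * z * (n - z) + z * (z - 1) / 2.
Definition K3 (R : numFieldType) (n q z : R) := (q - 1)^+3 * (n - z) * (n - z - 1) * (n - z - 2) / 6
   - (q - 1)^+2 * z * (n - z) * (n - z - 1) / 2 + (q - 1) * z * (z - 1) * (n - z) / 2
   - z * (z - 1) * (z - 2) / 6.

Section Core.
Variables (R : numFieldType) (n q j e : R).
Let d : R := n - 1 - (n - 2 + j) / q.
Let d0 : R := n - j * (n - 1) / (q * (j + q - 1)).
Let A : R := - (q + j - 2) * (e * q * (j + q - 1)) ^+ 2
      + (n - 1) * (q - 1) * (j + q) * (n * (q - 1) - j * (q + j - 2))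
      + e * q * (j + q - 1)
        * ((q ^+ 2 + j * q - q - 2 * j) * (q + j - 2) + 2 * n * (q - 1)).
Let B : R := (n - 2 + j) * (q - 1) + j * (j - 1) + e * q * (j + q - 1).
Let C : R := (n - 1) * (q - 1) * (j + q) + e * q * (j + q - 1).
Let D : R := ((n - 1) * (q - 1) + (2 * e - 1) * (j + q - 1) * (q / 2)) ^+ 2
      + (j + q - 1) ^+ 2 * ((n - 1) * (q - 1) - q ^+ 2 / 4).
Let E : R := (j + q - 1) ^+ 3 * ((n - 1) * (q - 2) + n - j).
Let mu_d : R := n * (q - 1) * C * D * (C + q * (j + q - 1))
      / (A * B * (B + q * (j + q - 1))).
Let mu_1 : R := e * n * (q - 1) * E * (C + q * (j + q - 1)) / (A * B).
Let mu_2 : R := (1 - e) * n * (q - 1) * C * E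
      / (A * (B + q * (j + q - 1))).
Hypotheses (hq : q != 0) (hq1 : q - 1 != 0) (hw : j + q - 1 != 0) (hn : n != 0)
  (hn1 : n - 1 != 0) (hn2 : n - 2 != 0) (hA : A != 0) (hB : B != 0)
  (hBW : B + q * (j + q - 1) != 0).

Lemma core1 : mu_d * (K1 n q d / ((q - 1) * n)) + mu_1 * (K1 n q (d0 + e - 1) / ((q - 1) * n))
  + mu_2 * (K1 n q (d0 + e) / ((q - 1) * n)) = -1.
Proof using hq hq1 hw hn hn1 hn2 hA hB hBW. rewrite /mu_d /mu_1 /mu_2 /K1 /d /d0. rewrite /A /B /C /D /E. field. by repeat (apply/andP; split).
Qed.
Lemma core2 : mu_d * (K2 n q d / ((q - 1)^+2 * (n * (n - 1) / 2))) + mu_1 * (K2 n q (d0 + e - 1) / ((q - 1)^+2 * (n * (n - 1) / 2)))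
  + mu_2 * (K2 n q (d0 + e) / ((q - 1)^+2 * (n * (n - 1) / 2))) = -1.
Proof using hq hq1 hw hn hn1 hn2 hA hB hBW. rewrite /mu_d /mu_1 /mu_2 /K2 /d /d0. rewrite /A /B /C /D /E. field. by repeat (apply/andP; split).
Qed.
Lemma core3 : mu_d * (K3 n q d / ((q - 1)^+3 * (n * (n - 1) * (n - 2) / 6))) + mu_1 * (K3 n q (d0 + e - 1) / ((q - 1)^+3 * (n * (n - 1) * (n - 2) / 6)))
  + mu_2 * (K3 n q (d0 + e) / ((q - 1)^+3 * (n * (n - 1) * (n - 2) / 6))) = -1.
Proof using hq hq1 hw hn hn1 hn2 hA hB hBW. rewrite /mu_d /mu_1 /mu_2 /K3 /d /d0. rewrite /A /B /C /D /E. field. by repeat (apply/andP; split).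
Qed.
End Core.

Lemma posA (R : realFieldType) (n q j e : R) : 2 <= q -> 0 <= j ->
  j ^+ 2 + j * q < (q - 1) * (n - 2) -> 0 < e -> e <= 1 ->
  0 < - (q + j - 2) * (e * q * (j + q - 1)) ^+ 2
      + (n - 1) * (q - 1) * (j + q) * (n * (q - 1) - j * (q + j - 2))
      + e * q * (j + q - 1)
        * ((q ^+ 2 + j * q - q - 2 * j) * (q + j - 2) + 2 * n * (q - 1)).
Proof.
move=> hq hj hk he0 he1.
set w := j + q - 1.
set P := n * (q - 1) - j * (q + j - 2).
have hw : 1 <= w by rewrite /w; lra.
have hn2 : 0 < n - 2.
  have : 0 < (q - 1) * (n - 2) by nra.
  by rewrite pmulr_rgt0 //; lra.
have hP : 2 * w < P by rewrite /P /w; nra.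
have hA0 : 0 < (n - 1) * (q - 1) * (j + q) * P.
  by apply: mulr_gt0; [apply: mulr_gt0; [apply: mulr_gt0|]|]; lra.
have ht1 : j * q < (n - 1) * (q - 1) by nra.
have ht2 : 2 * w * (w - 1) < (w + 1) * P by nra.
have h0 : 0 <= j * q by nra.
have h0' : 0 <= 2 * w * (w - 1) by nra.
have ht : j * q * (2 * w * (w - 1)) <= (n - 1) * (q - 1) * ((w + 1) * P).
  apply: ler_pM => //; lra.
have hA1 : 0 < (n - 1) * (q - 1) * (w + 1) * P - 2 * j * q * w * (w - 1)
               + 2 * q * w * n * (q - 1).
  have : 0 < 2 * q * w * n * (q - 1).
    by apply: mulr_gt0; [apply: mulr_gt0; [apply: mulr_gt0; [apply: mulr_gt0|]|]|]; lra.
  have -> : (n - 1) * (q - 1) * (w + 1) * P - 2 * j * q * w * (w - 1)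
      = (n - 1) * (q - 1) * ((w + 1) * P) - j * q * (2 * w * (w - 1)) by ring.
  lra.
have hX : 0 <= (q + j - 2) * (q * w) ^+ 2 * e * (1 - e).
  apply: mulr_ge0; [apply: mulr_ge0; [apply: mulr_ge0|]|]; try lra.
  exact: sqr_ge0.
have -> : - (q + j - 2) * (e * q * (j + q - 1)) ^+ 2
      + (n - 1) * (q - 1) * (j + q) * (n * (q - 1) - j * (q + j - 2))
      + e * q * (j + q - 1)
        * ((q ^+ 2 + j * q - q - 2 * j) * (q + j - 2) + 2 * n * (q - 1))
   = (1 - e) * ((n - 1) * (q - 1) * (j + q) * P)
     + e * ((n - 1) * (q - 1) * (w + 1) * P - 2 * j * q * w * (w - 1)
               + 2 * q * w * n * (q - 1))
     + (q + j - 2) * (q * w) ^+ 2 * e * (1 - e).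
  by rewrite /P /w; ring.
have : 0 <= (1 - e) * ((n - 1) * (q - 1) * (j + q) * P).
  apply: mulr_ge0; lra.
have : 0 < e * ((n - 1) * (q - 1) * (w + 1) * P - 2 * j * q * w * (w - 1)
               + 2 * q * w * n * (q - 1)) by apply: mulr_gt0.
lra.
Qed.

Lemma kraw1' (R : numFieldType) n q (z : R) : kraw n q 1 z = K1 n%:R q%:R z.
Proof. by rewrite kraw1. Qed.
Lemma kraw2' (R : numFieldType) n q (z : R) : kraw n q 2 z = K2 n%:R q%:R z.
Proof. by rewrite kraw2. Qed.
Lemma kraw3' (R : numFieldType) n q (z : R) : kraw n q 3 z = K3 n%:R q%:R z.
Proof. by rewrite kraw3. Qed.

Theorem lemma3 (R : rcfType) (n q : nat) (d : int) (j e : R) :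
  (2 <= n)%N -> (2 <= q)%N ->
  let nR : R := n%:R in
  let qR : R := q%:R in
  let S1 : R := Num.sqrt (qR ^+ 2 + 4 * (qR - 1) * (nR - 2)) in
  d%:~R = nR - 1 - (nR - 2 + j) / qR ->
  0 <= j -> j < (S1 - qR) / 2 ->
  let d0 : R := nR - j * (nR - 1) / (qR * (j + qR - 1)) in
  0 < e -> e <= 1 -> (exists m : int, d0 + e = m%:~R) ->
  let A : R := - (qR + j - 2) * (e * qR * (j + qR - 1)) ^+ 2
      + (nR - 1) * (qR - 1) * (j + qR) * (nR * (qR - 1) - j * (qR + j - 2))
      + e * qR * (j + qR - 1)
        * ((qR ^+ 2 + j * qR - qR - 2 * j) * (qR + j - 2) + 2 * nR * (qR - 1)) in
  let B : R := (nR - 2 + j) * (qR - 1) + j * (j - 1) + e * qR * (j + qR - 1) in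
  let C : R := (nR - 1) * (qR - 1) * (j + qR) + e * qR * (j + qR - 1) in
  let D : R := ((nR - 1) * (qR - 1) + (2 * e - 1) * (j + qR - 1) * (qR / 2)) ^+ 2
      + (j + qR - 1) ^+ 2 * ((nR - 1) * (qR - 1) - qR ^+ 2 / 4) in
  let E : R := (j + qR - 1) ^+ 3 * ((nR - 1) * (qR - 2) + nR - j) in
  let mu_d : R := nR * (qR - 1) * C * D * (C + qR * (j + qR - 1))
      / (A * B * (B + qR * (j + qR - 1))) in
  let mu_1 : R := e * nR * (qR - 1) * E * (C + qR * (j + qR - 1)) / (A * B) in
  let mu_2 : R := (1 - e) * nR * (qR - 1) * C * E
      / (A * (B + qR * (j + qR - 1))) in
  forall l : nat, (1 <= l <= 3)%N ->
    mu_d * (kraw n q l (d%:~R : R) / rl R n q l)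
    + mu_1 * (kraw n q l (d0 + e - 1) / rl R n q l)
    + mu_2 * (kraw n q l (d0 + e) / rl R n q l) = -1.
Proof.
move=> hn hq nR qR S1 hd hj0 hjS d0 he0 he1 _ A B C D E mu_d mu_1 mu_2 l hl.
have hq2 : 2 <= qR by rewrite /qR (ler_nat R 2 q).
have hn2 : 2 <= nR by rewrite /nR (ler_nat R 2 n).
have hrad : 0 <= qR ^+ 2 + 4 * (qR - 1) * (nR - 2) by nra.
have hS1 : S1 ^+ 2 = qR ^+ 2 + 4 * (qR - 1) * (nR - 2) by rewrite /S1 sqr_sqrtr.
have hS0 : 0 <= S1 by rewrite /S1 sqrtr_ge0.
have hlt : 2 * j + qR < S1 by lra.
have hsq : (2 * j + qR) ^+ 2 < S1 ^+ 2 by nra.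
have hk : j ^+ 2 + j * qR < (qR - 1) * (nR - 2) by rewrite hS1 in hsq; nra.
have hn3 : 2 < nR.
  have : 0 < (qR - 1) * (nR - 2) by nra.
  by rewrite pmulr_rgt0; lra.
have hA : A != 0 by rewrite gt_eqF // /A posA.
have hw : 0 < j + qR - 1 by lra.
have hW : 0 < qR * (j + qR - 1) by apply: mulr_gt0; lra.
have h1 : 0 <= j * (j + qR - 1) by apply: mulr_ge0; lra.
have h2 : 0 < e * (qR * (j + qR - 1)) by apply: mulr_gt0.
have hB : 0 < B.
  have -> : B = ((nR - 2) * (qR - 1) - (j ^+ 2 + j * qR)) + 2 * (j * (j + qR - 1))
     + e * (qR * (j + qR - 1)) by rewrite /B; ring.
  lra.
have hBW : 0 < B + qR * (j + qR - 1) by lra.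
rewrite hd.
have nq : qR != 0 by rewrite gt_eqF //; lra.
have nq1 : qR - 1 != 0 by rewrite gt_eqF //; lra.
have nw : j + qR - 1 != 0 by rewrite gt_eqF.
have nn : nR != 0 by rewrite gt_eqF //; lra.
have nn1 : nR - 1 != 0 by rewrite gt_eqF //; lra.
have nn2 : nR - 2 != 0 by rewrite gt_eqF //; lra.
have nB : B != 0 by rewrite gt_eqF.
have nBW : B + qR * (j + qR - 1) != 0 by rewrite gt_eqF.

have := core1 nq nq1 nw nn nn1 nn2 hA nB nBW.
have := core2 nq nq1 nw nn nn1 nn2 hA nB nBW.
have := core3 nq nq1 nw nn nn1 nn2 hA nB nBW.
move: hn3; rewrite /nR (ltr_nat R 2 n) => hn3'.
have [k hk3] : exists k, n = k.+3 by exists (n - 3)%N; rewrite -addn3 subnK.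
rewrite /nR in nn nn1 nn2 *.
clear -hk3 hl; subst n.
case: l hl => [|[|[|[|l]]]] // _.
- by rewrite !kraw1' /rl expr1 bin1 => _ _; apply.
- by rewrite !kraw2' /rl bin2R => _ h _; apply: h.
- by rewrite !kraw3' /rl bin3R => h _ _; apply: h.
Qed.
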